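(* Let $k\in\mathbb C\setminus\mathbb Q$, $n,m\in\mathbb Z_{>0}$, with $\mathcal E$-equivalence taken at $p_0=n+k^{-1}m$. Let $E\subset\mathcal P_{n,m}$ be an $\mathcal E$-equivalence class, let $x\in\pi(n,m)$, and suppose there is $\alpha\in E$ with $S_x(\alpha)\neq\emptyset$. Then there exists a unique $\mathcal E$-equivalence class $E_x$, different from $E$, such that $X(\alpha)\cap E_x=S_x(\alpha)$ for every $\alpha\in E$.
   Context: Partitions are Young diagrams (finite sets of boxes $(i,j)\in\mathbb Z^2_{>0}$, $i$ = row, $j$ = column, closed under moving up or left); a bipartition is a pair of partitions, operations componentwise. For a box $x=(i,j)$, $c(x,a)=(j-1)+k(i-1)+a$; for $\alpha=(\lambda,\mu)$, $b_r(\alpha,k,p_0)=\sum_{x\in\lambda}c(x,0)^{r-1}+(-1)^r\sum_{y\in\mu}c(y,1+k-kp_0)^{r-1}$; bipartitions are $\mathcal E$-equivalent if all $b_r$, $r\ge1$, coincide. $\pi(n,m)=\{(i,j):1\le i\le n,1\le j\le m\}$, $\theta(i,j)=(n-i+1,m-j+1)$, $\mathcal P_{n,m}$ = bipartitions $(\lambda,\mu)$ with $\lambda,\mu\subset\pi(n,m)$. For $\alpha=(\lambda,\mu)\in\mathcal P_{n,m}$ and $x\in\pi(n,m)$, $S_x(\alpha)$ is the set consisting of $(\lambda\cup x,\mu)$, included only if $x\notin\lambda$ and $\lambda\cup x$ is a Young diagram, and of $(\lambda,\mu\setminus\theta(x))$, included only if $\theta(x)\in\mu$ and $\mu\setminus\theta(x)$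 is a Young diagram. $X(\alpha)$ is the set of all bipartitions $\beta=(\tilde\lambda,\tilde\mu)$ such that $\alpha$ is obtained from $\beta$ either by deleting one box from $\tilde\lambda$ or by adding one box to $\tilde\mu$. *)

(* Defs.v *)
From HB Require Import structures.
From mathcomp Require Import all_boot all_order all_algebra.
From mathcomp Require Import finmap.
From mathcomp Require Import reals.
From mathcomp Require Import complex.
Set Implicit Arguments. Unset Strict Implicit. Unset Printing Implicit Defensive.
Import Order.TTheory GRing.Theory Num.Theory.
Local Open Scope ring_scope.


(* A box (i,j): i = row, j = column. *)
Definition box := (nat * nat)%type.

Definition is_young (l : {fset box}) : bool :=
  [forall x : l, let: (i, j) := fsval x in
     [&& (0 < i)%N, (0 < j)%N,
         (1 < i)%N ==> ((i.-1, j) \in l) &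
         (1 < j)%N ==> ((i, j.-1) \in l)]].

Definition bipartition := ({fset box} * {fset box})%type.

Definition is_bip (a : bipartition) : Prop := is_young (fst a) /\ is_young (snd a).

Definition cnt (R : realType) (k : R[i]) (x : box) (a : R[i]) : R[i] :=
  ((snd x).-1)%:R + k * ((fst x).-1)%:R + a.

Definition b_r (R : realType) (r : nat) (a : bipartition) (k p0 : R[i]) : R[i] :=
  \sum_(x <- enum_fset (fst a)) cnt k x 0 ^+ r.-1
  + (-1) ^+ r * \sum_(y <- enum_fset (snd a)) cnt k y (1 + k - k * p0) ^+ r.-1.

Definition E_equiv (R : realType) (k p0 : R[i]) (a b : bipartition) : Prop :=
  forall r : nat, (0 < r)%N -> b_r r a k p0 = b_r r b k p0.

Definition in_rect (n m : nat) (x : box) : bool :=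
  [&& (0 < (fst x))%N, ((fst x) <= n)%N, (0 < (snd x))%N & ((snd x) <= m)%N].

Definition theta (n m : nat) (x : box) : box := (n - (fst x) + 1, m - (snd x) + 1)%N.

Definition P_nm (n m : nat) (a : bipartition) : Prop :=
  is_bip a /\ (forall x, x \in (fst a) -> in_rect n m x)
           /\ (forall x, x \in (snd a) -> in_rect n m x).

Definition bset := bipartition -> Prop.
Definition bset_eq (A B : bset) : Prop := forall b, A b <-> B b.

Definition is_class (R : realType) (k p0 : R[i]) (n m : nat) (E : bset) : Prop :=
  exists a0, P_nm n m a0 /\ bset_eq E (fun b => P_nm n m b /\ E_equiv k p0 a0 b).

Definition S_x (n m : nat) (x : box) (a : bipartition) : bset :=
  fun b =>
    (x \notin (fst a) /\ is_young (x |` fst a)%fset /\ b = ((x |` fst a)%fset, snd a))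
    \/ (theta n m x \in (snd a) /\ is_young (snd a `\ theta n m x)%fset
        /\ b = (fst a, (snd a `\ theta n m x)%fset)).

Definition X_of (a : bipartition) : bset :=
  fun b => is_bip b /\
    (((snd b) = (snd a) /\ exists y, y \in (fst b) /\ fst a = (fst b `\ y)%fset)
     \/ ((fst b) = (fst a) /\ exists y, y \notin (snd b) /\ snd a = (y |` snd b)%fset)).

(* Main.v *)
Require Import Defs.
From HB Require Import structures.
From mathcomp Require Import all_boot all_order all_algebra.
From mathcomp Require Import finmap reals complex.
From mathcomp Require Import ring zify.
Import GRing.Theory Num.Theory.
Local Open Scope ring_scope.
Set Implicit Arguments. Unset Strict Implicit.

Lemma cnt_inj (R : realType) (k : R[i]) (hk : ~ exists q : rat, k = ratr q)
  (x y : box) : (0 < x.1)%N -> (0 < x.2)%N -> (0 < y.1)%N -> (0 < y.2)%N ->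
  cnt k x 0 = cnt k y 0 -> x = y.
Proof.
case: x => i j; case: y => i' j' /= h1 h2 h3 h4; rewrite /cnt /= !addr0.
have cz : forall n : nat, (n%:R : R[i]) = (n%:Z)%:~R by move=> n; rewrite pmulrn.
rewrite !cz => H.
set u : int := ((i.-1)%:Z - (i'.-1)%:Z).
set v : int := ((j'.-1)%:Z - (j.-1)%:Z).
have e : k * u%:~R = v%:~R.
  have: (k * u%:~R) - v%:~R = ((j.-1)%:Z%:~R + k * (i.-1)%:Z%:~R)
        - ((j'.-1)%:Z%:~R + k * (i'.-1)%:Z%:~R) :> R[i].
    by rewrite /u /v !rmorphB /=; ring.
  by rewrite H subrr => /eqP; rewrite subr_eq0 => /eqP.
have [u0|u0] := eqVneq u 0.
  move: e; rewrite u0 mulr0 => /esym/eqP; rewrite intr_eq0 => /eqP v0.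
  move: u0 v0; rewrite /u /v => u0 v0.
  have ei : i = i' by lia.
  have ej : j = j' by lia.
  by rewrite ei ej.
exfalso; apply: hk; exists (v%:~R / u%:~R).
rewrite fmorph_div !rmorph_int -e mulfK //.
by rewrite intr_eq0.
Qed.

Lemma theta_rect n m y : in_rect n m y ->
  in_rect n m (theta n m y) /\ theta n m (theta n m y) = y.
Proof.
case: y => i j; rewrite /in_rect /theta /= => /and4P[h1 h2 h3 h4]; split.
  by apply/and4P; split; lia.
congr pair; lia.
Qed.

Lemma cnt_theta (R : realType) (k : R[i]) n m y : k != 0 -> in_rect n m y ->
  cnt k y (1 + k - k * (n%:R + k^-1 * m%:R)) = - cnt k (theta n m y) 0.
Proof.
case: y => i j k0; rewrite /in_rect /theta /cnt /= => /and4P[h1 h2 h3 h4].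
have nB : forall a b : nat, (b <= a)%N -> ((a - b)%N%:R : R[i]) = a%:R - b%:R.
  by move=> a b hb; rewrite natrB.
have -> : (i.-1 = i - 1)%N by lia.
have -> : (j.-1 = j - 1)%N by lia.
have -> : ((n - i + 1).-1 = n - i)%N by lia.
have -> : ((m - j + 1).-1 = m - j)%N by lia.
rewrite !nB //; try lia.
have -> : k * (n%:R + k^-1 * m%:R) = k * n%:R + m%:R by rewrite mulrDr mulrA mulfV // mul1r.
ring.
Qed.

Lemma b_addL (R : realType) r (l mu : {fset box}) y (k p0 : R[i]) : y \notin l ->
  b_r r ((y |` l)%fset, mu) k p0 = b_r r (l, mu) k p0 + cnt k y 0 ^+ r.-1.
Proof. by move=> hy; rewrite /b_r /= big_fsetU1 //=; ring. Qed.

Lemma b_addR (R : realType) r (l mu : {fset box}) y (k p0 : R[i]) : y \notin mu ->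
  b_r r (l, (y |` mu)%fset) k p0 = b_r r (l, mu) k p0
     + (-1) ^+ r * cnt k y (1 + k - k * p0) ^+ r.-1.
Proof. by move=> hy; rewrite /b_r /= big_fsetU1 //=; ring. Qed.

Lemma S_props (R : realType) (k p0 : R[i]) n m x a b :
  k != 0 -> p0 = n%:R + k^-1 * m%:R ->
  in_rect n m x -> P_nm n m a -> S_x n m x a b ->
  [/\ P_nm n m b, X_of a b &
    forall r, (0 < r)%N -> b_r r b k p0 = b_r r a k p0 + cnt k x 0 ^+ r.-1].
Proof.
case: a => l mu k0 hp hx [[yl ymu] [cl cmu]] /=.
case=> [[hxl [hy ->]] | [ht [hy ->]]].
  split.
  - split; first by split.
    split=> //= y; rewrite in_fset1U => /orP[/eqP -> | ]; [exact: hx | exact: cl].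
  - split; first by split.
    left; split=> //; exists x; split; first exact: fset1U1.
    by rewrite fsetU1K.
  - by move=> r _; rewrite b_addL.
set t := theta n m x in ht hy *.
have ht' : t \notin (mu `\ t)%fset by rewrite fsetD11.
have emu : mu = (t |` (mu `\ t))%fset by rewrite fsetD1K.
split.
- split; first by split.
  split=> //= y /fsetD1P [_]; exact: cmu.
- split; first by split.
  right; split=> //; exists t; split=> //.
- move=> [//|r] _.
  have -> : b_r r.+1 (l, mu) k p0 = b_r r.+1 (l, (t |` (mu `\ t))%fset) k p0
    by rewrite -emu.
  rewrite b_addR // hp cnt_theta //; last by have [] := theta_rect hx.
  have [_ ->] := theta_rect hx.
  have s : (-1) ^+ r * (-1) ^+ r = 1 :> R[i] by rewrite -exprMn mulrNN mulr1 expr1n.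
  rewrite /= exprS [(- cnt _ _ _) ^+ _]exprNn.
  have -> : forall z : R[i], -1 * (-1) ^+ r * ((-1) ^+ r * z) = - z.
    by move=> z; rewrite mulrA -(mulrA (-1)) s; ring.
  ring.
Qed.

Lemma young_pos (l : {fset box}) y : is_young l -> y \in l -> (0 < y.1)%N /\ (0 < y.2)%N.
Proof.
move=> /forallP H hy; have := H [`hy]%fset; rewrite /=.
by case: y hy => i j hy /and4P[].
Qed.

Lemma rect_pos n m y : in_rect n m y -> (0 < y.1)%N /\ (0 < y.2)%N.
Proof. by case/and4P. Qed.

Lemma X_to_S (R : realType) (k p0 : R[i]) n m x a b :
  (~ exists q : rat, k = ratr q) -> p0 = n%:R + k^-1 * m%:R ->
  in_rect n m x -> P_nm n m a -> X_of a b ->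
  b_r 2 b k p0 = b_r 2 a k p0 + cnt k x 0 -> S_x n m x a b.
Proof.
move=> hk hp hx.
have k0 : k != 0.
  by apply/eqP => k0; apply: hk; exists 0; rewrite k0 rmorph0.
have [xp1 xp2] := rect_pos hx.
case: a => l mu; case: b => l' mu' [[yl ymu] [cl cmu]].
move=> [[yl' ymu'] [[/= -> [y [hy el]]] | [/= -> [y [hy emu]]]]] hb.
- have hyl : y \notin l by rewrite el fsetD11.
  have el' : l' = (y |` l)%fset by rewrite el fsetD1K.
  rewrite el' b_addL // /= expr1 in hb.
  have cyx : cnt k y 0 = cnt k x 0 by move/addrI: hb.
  have [yp1 yp2] := young_pos yl' hy.
  have eyx := cnt_inj hk yp1 yp2 xp1 xp2 cyx.
  rewrite -eyx; left; split=> //; split; first by rewrite -el'.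
  by rewrite el'.
- have ymu2 : y \in mu by rewrite emu fset1U1.
  have hyr := cmu _ ymu2.
  move: hb; rewrite emu b_addR //= => hb.
  have h0 : (-1) ^+ 2 * cnt k y (1 + k - k * p0) ^+ 1 + cnt k x 0 = 0.
    by apply: (@addrI _ (b_r 2 (l, mu') k p0)); rewrite addr0 addrA -hb.
  move/eqP: h0; rewrite expr1 sqrrN expr1n mul1r addr_eq0 => /eqP.
  rewrite hp cnt_theta // => /oppr_inj cyx.
  have [tr tt] := theta_rect hyr.
  have [yp1 yp2] := rect_pos tr.
  have eyx := cnt_inj hk yp1 yp2 xp1 xp2 cyx.
  have eyt : y = theta n m x by rewrite -eyx tt.
  right; rewrite -eyt /= fsetU1K //; split; first exact: fset1U1.
  by split.
Qed.

Theorem mainTheorem5 (R : realType) (k : R[i])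
  (hk : ~ exists q : rat, k = ratr q)
  (n m : nat) (hn : (0 < n)%N) (hm : (0 < m)%N)
  (E : bset) (x : box) :
  let p0 := n%:R + k^-1 * m%:R in
  is_class k p0 n m E ->
  in_rect n m x ->
  (exists a, E a /\ exists b, S_x n m x a b) ->
  exists Ex : bset,
    [/\ is_class k p0 n m Ex,
        ~ bset_eq Ex E,
        (forall a, E a -> bset_eq (fun b => X_of a b /\ Ex b) (S_x n m x a))
      & (forall Ey : bset,
           is_class k p0 n m Ey -> ~ bset_eq Ey E ->
           (forall a, E a -> bset_eq (fun b => X_of a b /\ Ey b) (S_x n m x a)) ->
           bset_eq Ey Ex)].
Proof.
move=> p0 [a0 [hPa0 hEeq]] hx [al [hal [b0 hS]]].
have hp : p0 = n%:R + k^-1 * m%:R by [].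
have k0 : k != 0.
  by apply/eqP => k0; apply: hk; exists 0; rewrite k0 rmorph0.
have [hPal eqal] := (hEeq al).1 hal.
have [hPb0 hXb0 hsh] := S_props k0 hp hx hPal hS.
exists (fun b => P_nm n m b /\ E_equiv k p0 b0 b); split.
- exists b0; split=> // b; split=> //.
- move=> H.
  have [_ eqb0] := (hEeq b0).1 ((H b0).1 (conj hPb0 (fun r _ => erefl))).
  have := hsh 1%N isT; rewrite -eqb0 // eqal //= expr0 => /eqP.
  by rewrite eq_sym -subr_eq0 addrC addKr oner_eq0.
- move=> a ha; have [hPa eqa] := (hEeq a).1 ha => b; split.
  + move=> [hX [hPb heq]]; apply: (X_to_S hk hp hx hPa hX).
    rewrite -heq // hsh // -eqal // eqa //.
  + move=> hSb; have [hPb hXb hshb] := S_props k0 hp hx hPa hSb.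
    split=> //; split=> // r hr.
    by rewrite hshb // hsh // -eqal // eqa.
- move=> Ey [a1 [hPa1 hEy]] _ hcond b.
  have [_ /(hEy b0).1 [_ e1]] := (hcond al hal b0).2 hS.
  split.
  + move=> /(hEy b).1 [hPb e2]; split=> // r hr; by rewrite -e1 // e2.
  + move=> [hPb e2]; apply/(hEy b).2; split=> // r hr; by rewrite e1 // e2.
Qed.
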